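(* Let $\mathcal F$ be a finite set of fragments, $\{u,v\}\in D$ with $u<v$, and let $E_u=\{ES_F:F\in\mathcal F_{\to u}\}$, $L_u=\{LS_F:F\in\mathcal F_{u\to}\}$, $E_v=\{ES_F:F\in\mathcal F_{\to v}\}$, $L_v=\{LS_F:F\in\mathcal F_{v\to}\}$. Consider, for $t\in\mathbb R$, the inequalities in variables $x\in\mathbb R^{\mathcal F}$ and $p\in\mathbb R$: (a$_t$) $\sum_{F\in\mathcal F_{\to u}:ES_F\ge t}x_F+\sum_{F\in\mathcal F_{v\to}:LS_F<t+\delta^{\min}_{uv}}x_F\le 2-p$; (b$_t$) $\sum_{F\in\mathcal F_{u\to}:LS_F\le t}x_F+\sum_{F\in\mathcal F_{\to v}:ES_F>t+\delta^{\max}_{uv}}x_F\le 2-p$; (c$_t$) $\sum_{F\in\mathcal F_{\to v}:ES_F\ge t}x_F+\sum_{F\in\mathcal F_{u\to}:LS_F<t+\delta^{\min}_{vu}}x_F\le 1+p$; (d$_t$) $\sum_{F\in\mathcal F_{v\to}:LS_F\le t}x_F+\sum_{F\in\mathcal F_{\to u}:ES_F>t+\delta^{\max}_{vu}}x_F\le 1+p$. Suppose $x\ge 0$, $0\le p\le 1$, and $\sum_{F\in\mathcal F_{\to w}}x_F\le1$, $\sum_{F\in\mathcal F_{w\to}}x_F\le 1$ for $w\in\{u,v\}$. Then: if (a$_t$) holds for all $t\in E_u$, it holds for all $t\in[\alpha_u,\beta_u]$; if (b$_t$) holds for all $t\in L_u$, it holds for all $t\in[\alpha_u,\beta_u]$;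 if (c$_t$) holds for all $t\in E_v$, it holds for all $t\in[\alpha_v,\beta_v]$; and if (d$_t$) holds for all $t\in L_v$, it holds for all $t\in[\alpha_v,\beta_v]$.
   Context: Instance data: tasks $V$, depot $0$, travel times $t_{uv}$, durations $d_v$, demands $q_v$, time windows $[\alpha_v,\beta_v]$, capacity $Q$; $D$ a set of unordered pairs of distinct tasks with parameters $\delta^{\min}_{uv},\delta^{\max}_{uv},\delta^{\min}_{vu},\delta^{\max}_{vu}\ge0$, $V_D$ the set of tasks in some pair of $D$. A fragment is a sequence $F=(v_1,\dots,v_\ell)$, $\ell\ge 2$, with $v_1,v_\ell\in V_D\cup\{0\}$, $v_2,\dots,v_{\ell-1}\in V\setminus V_D$, each task other than the depot occurring at most once, $\sum_{i=1}^{\ell-1}q_{v_i}\le Q$, and admitting a schedule. A schedule of $F$ is $(b_1,\dots,b_\ell)$ with $b_i\in[\alpha_{v_i},\beta_{v_i}]$, $b_i+d_{v_i}+t_{v_iv_{i+1}}\le b_{i+1}$ for $i<\ell$, and $\delta^{\min}_{v_1v_\ell}\le b_\ell-b_1\le\delta^{\max}_{v_1v_\ell}$ if $\{v_1,v_\ell\}\in D$. $LS_F=\max b_1$ and $ES_F=\min b_\ell$ over all schedules of $F$. For a set of fragments $\mathcal F$ and $w\in V_D$: $\mathcal F_{\to w}$ is the set of fragments in $\mathcal F$ ending at $w$ and $\mathcal F_{w\to}$ the set of those starting at $w$. *)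

(* Defs.v *)
From HB Require Import structures.
From mathcomp Require Import all_boot all_order all_algebra.
From mathcomp Require Import boolp classical_sets reals.
Set Implicit Arguments. Unset Strict Implicit. Unset Printing Implicit Defensive.
Import Order.TTheory GRing.Theory Num.Theory.
Local Open Scope ring_scope.

(* Nodes are 'I_n.+1; node ord0 is the depot 0, the other nodes are the tasks V. *)
Record instance (R : realType) (n : nat) := Instance {
  tt    : 'I_n.+1 -> 'I_n.+1 -> R;
  dur   : 'I_n.+1 -> R;
  dem   : 'I_n.+1 -> R;
  alpha : 'I_n.+1 -> R;
  beta  : 'I_n.+1 -> R;
  cap   : R;
  Drel  : rel 'I_n.+1;               (* {u,v} \in D  <->  Drel u v *)
  dmin  : 'I_n.+1 -> 'I_n.+1 -> R;
  dmax  : 'I_n.+1 -> 'I_n.+1 -> R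
}.

Section Defs.
Variables (R : realType) (n : nat) (I : instance R n).

Definition depot : 'I_n.+1 := ord0.
Definition is_task (w : 'I_n.+1) : bool := w != depot.

Definition wf_instance : Prop :=
  (forall u v, Drel I u v = Drel I v u) /\
  (forall u v, Drel I u v -> [/\ is_task u, is_task v & u != v]) /\
  (forall u v, Drel I u v -> 0 <= dmin I u v /\ 0 <= dmax I u v).

Definition in_VD (w : 'I_n.+1) : bool := [exists z, Drel I w z].

Definition fnode (F : seq 'I_n.+1) (i : nat) : 'I_n.+1 := nth depot F i.
Definition fst_node (F : seq 'I_n.+1) := fnode F 0.
Definition lst_node (F : seq 'I_n.+1) := fnode F (size F).-1.

(* b = (b_1,...,b_l) is encoded as b : nat -> R with indices 0..l-1 *)
Definition is_schedule (F : seq 'I_n.+1) (b : nat -> R) : Prop :=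
  (forall i, (i < size F)%N -> alpha I (fnode F i) <= b i <= beta I (fnode F i)) /\
  (forall i, (i.+1 < size F)%N ->
      b i + dur I (fnode F i) + tt I (fnode F i) (fnode F i.+1) <= b i.+1) /\
  (Drel I (fst_node F) (lst_node F) ->
      dmin I (fst_node F) (lst_node F) <= b (size F).-1 - b 0
      <= dmax I (fst_node F) (lst_node F)).

Definition is_fragment (F : seq 'I_n.+1) : Prop :=
  [/\ (2 <= size F)%N,
      in_VD (fst_node F) || (fst_node F == depot),
      in_VD (lst_node F) || (lst_node F == depot),
      (forall i, (0 < i)%N -> (i < (size F).-1)%N ->
          is_task (fnode F i) && ~~ in_VD (fnode F i)) &
    [/\ (forall w, is_task w -> (count_mem w F <= 1)%N),
      \sum_(0 <= i < (size F).-1) dem I (fnode F i) <= cap I &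
      exists b, is_schedule F b]].

Definition LS (F : seq 'I_n.+1) : R := sup [set b 0%N | b in is_schedule F].
Definition ES (F : seq 'I_n.+1) : R :=
  inf [set b (size F).-1 | b in is_schedule F].

End Defs.

(* Main.v *)
Require Import Defs.
From HB Require Import structures.
From mathcomp Require Import all_boot all_order all_algebra.
From mathcomp Require Import boolp classical_sets reals.
From mathcomp Require Import lra.
Import Order.TTheory GRing.Theory Num.Theory.
Local Open Scope ring_scope.

Section Helpers.
Variable R : realType.

Lemma sum_sub (T : eqType) (s : seq T) (A B : pred T) (x : T -> R) :
  (forall F, F \in s -> 0 <= x F) -> (forall F, F \in s -> A F -> B F) ->
  \sum_(F <- s | A F) x F <= \sum_(F <- s | B F) x F.
Proof.
move=> x0 AB; rewrite big_mkcond [X in _ <= X]big_mkcond big_seq [X in _ <= X]big_seq.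
apply: ler_sum => F Fs; case: ifP => hA; first by rewrite (AB F Fs hA).
by case: ifP => _ //; exact: x0.
Qed.

Lemma seq_min (s : seq R) : s != [::] -> exists2 m, m \in s & forall y, y \in s -> m <= y.
Proof.
elim: s => // a s IH _; case: (eqVneq s [::]) => [->|ns].
  by exists a; rewrite ?mem_seq1 // => y; rewrite mem_seq1 => /eqP ->.
have [m ms mmin] := IH ns; case: (lerP a m) => am.
  exists a; first by rewrite mem_head.
  by move=> y; rewrite in_cons => /orP [/eqP ->//|/mmin]; apply: le_trans.
exists m; first by rewrite in_cons ms orbT.
by move=> y; rewrite in_cons => /orP [/eqP ->|/mmin//]; apply: ltW.
Qed.

Lemma seq_max (s : seq R) : s != [::] -> exists2 m, m \in s & forall y, y \in s -> y <= m.
Proof.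
elim: s => // a s IH _; case: (eqVneq s [::]) => [->|ns].
  by exists a; rewrite ?mem_seq1 // => y; rewrite mem_seq1 => /eqP ->.
have [m ms mmax] := IH ns; case: (lerP m a) => am.
  exists a; first by rewrite mem_head.
  by move=> y; rewrite in_cons => /orP [/eqP ->//|/mmax] ym; apply: le_trans am.
exists m; first by rewrite in_cons ms orbT.
by move=> y; rewrite in_cons => /orP [/eqP ->|/mmax//]; apply: ltW.
Qed.

Lemma typeA (T : eqType) (Fs : seq T) (x : T -> R) (P Q : pred T) (g h : T -> R) (c M : R) :
  (forall F, F \in Fs -> 0 <= x F) ->
  \sum_(F <- Fs | Q F) x F <= M ->
  (forall t, (exists2 F, F \in Fs & P F /\ t = g F) ->
     \sum_(F <- Fs | P F && (t <= g F)) x F + \sum_(F <- Fs | Q F && (h F < t + c)) x F <= M) ->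
  forall t, \sum_(F <- Fs | P F && (t <= g F)) x F + \sum_(F <- Fs | Q F && (h F < t + c)) x F <= M.
Proof.
move=> x0 hQ H t.
set s := [seq g F | F <- Fs & P F && (t <= g F)].
case: (eqVneq s [::]) => [s0|ns].
  have -> : \sum_(F <- Fs | P F && (t <= g F)) x F = 0.
    rewrite big_seq_cond big1 // => F /andP [Fs' HF]; exfalso.
    have : g F \in s by apply/mapP; exists F => //; rewrite mem_filter HF.
    by rewrite s0.
  rewrite add0r; apply: le_trans hQ; apply: sum_sub => // F _ /andP [] //.
have [m ms mmin] := @seq_min s ns.
have tm : t <= m by move: ms => /mapP [F]; rewrite mem_filter => /andP [/andP [_ hF] _] E; rewrite E.
have [F0 F0s [PF0 Em]] : exists2 F, F \in Fs & P F /\ m = g F.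
  by move: ms => /mapP [F]; rewrite mem_filter => /andP [/andP [? _] ?] E; exists F.
rewrite Em in tm mmin.
move=> /=; apply: le_trans (H (g F0) _); last by exists F0.
apply: lerD.
  rewrite le_eqVlt; apply/orP; left; apply/eqP.
  rewrite [LHS]big_seq_cond [RHS]big_seq_cond; apply: eq_bigl => F.
  case Fs': (F \in Fs) => //=; case PF: (P F) => //=.
  apply/idP/idP => hF.
    by apply: mmin; apply/mapP; exists F => //; rewrite mem_filter PF hF.
  exact: le_trans hF.
apply: sum_sub => // F _ /andP [-> hF] /=; apply: lt_le_trans hF _; by rewrite lerD2r.
Qed.

Lemma typeB (T : eqType) (Fs : seq T) (x : T -> R) (P Q : pred T) (g h : T -> R) (c M : R) :
  (forall F, F \in Fs -> 0 <= x F) ->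
  \sum_(F <- Fs | Q F) x F <= M ->
  (forall t, (exists2 F, F \in Fs & P F /\ t = g F) ->
     \sum_(F <- Fs | P F && (g F <= t)) x F + \sum_(F <- Fs | Q F && (t + c < h F)) x F <= M) ->
  forall t, \sum_(F <- Fs | P F && (g F <= t)) x F + \sum_(F <- Fs | Q F && (t + c < h F)) x F <= M.
Proof.
move=> x0 hQ H t.
set s := [seq g F | F <- Fs & P F && (g F <= t)].
case: (eqVneq s [::]) => [s0|ns].
  have -> : \sum_(F <- Fs | P F && (g F <= t)) x F = 0.
    rewrite big_seq_cond big1 // => F /andP [Fs' HF]; exfalso.
    have : g F \in s by apply/mapP; exists F => //; rewrite mem_filter HF.
    by rewrite s0.
  rewrite add0r; apply: le_trans hQ; apply: sum_sub => // F _ /andP [] //.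
have [m ms mmax] := @seq_max s ns.
have tm : m <= t by move: ms => /mapP [F]; rewrite mem_filter => /andP [/andP [_ hF] _] E; rewrite E.
have [F0 F0s [PF0 Em]] : exists2 F, F \in Fs & P F /\ m = g F.
  by move: ms => /mapP [F]; rewrite mem_filter => /andP [/andP [? _] ?] E; exists F.
rewrite Em in tm mmax.
move=> /=; apply: le_trans (H (g F0) _); last by exists F0.
apply: lerD.
  rewrite le_eqVlt; apply/orP; left; apply/eqP.
  rewrite [LHS]big_seq_cond [RHS]big_seq_cond; apply: eq_bigl => F.
  case Fs': (F \in Fs) => //=; case PF: (P F) => //=.
  apply/idP/idP => hF.
    by apply: mmax; apply/mapP; exists F => //; rewrite mem_filter PF hF.
  exact: le_trans tm.
apply: sum_sub => // F _ /andP [-> hF] /=; apply: le_lt_trans hF; by rewrite lerD2r.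
Qed.

End Helpers.

Theorem theorem2 (R : realType) (n : nat) (I : instance R n)
  (wfI : wf_instance I)
  (Fs : seq (seq 'I_n.+1)) (uniqFs : uniq Fs)
  (fragFs : forall F, F \in Fs -> is_fragment I F)
  (u v : 'I_n.+1) (Duv : Drel I u v) (ltuv : (u < v)%N)
  (x : seq 'I_n.+1 -> R) (p : R)
  (x_ge0 : forall F, F \in Fs -> 0 <= x F)
  (p_ge0 : 0 <= p) (p_le1 : p <= 1)
  (in_u : \sum_(F <- Fs | lst_node F == u) x F <= 1)
  (out_u : \sum_(F <- Fs | fst_node F == u) x F <= 1)
  (in_v : \sum_(F <- Fs | lst_node F == v) x F <= 1)
  (out_v : \sum_(F <- Fs | fst_node F == v) x F <= 1) :
  let a t := \sum_(F <- Fs | (lst_node F == u) && (t <= ES I F)) x F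
           + \sum_(F <- Fs | (fst_node F == v) && (LS I F < t + dmin I u v)) x F
           <= 2 - p in
  let b t := \sum_(F <- Fs | (fst_node F == u) && (LS I F <= t)) x F
           + \sum_(F <- Fs | (lst_node F == v) && (t + dmax I u v < ES I F)) x F
           <= 2 - p in
  let c t := \sum_(F <- Fs | (lst_node F == v) && (t <= ES I F)) x F
           + \sum_(F <- Fs | (fst_node F == u) && (LS I F < t + dmin I v u)) x F
           <= 1 + p in
  let d t := \sum_(F <- Fs | (fst_node F == v) && (LS I F <= t)) x F
           + \sum_(F <- Fs | (lst_node F == u) && (t + dmax I v u < ES I F)) x F
           <= 1 + p in
  let E_u t := exists2 F, F \in Fs & (lst_node F == u) /\ t = ES I F in
  let L_u t := exists2 F, F \in Fs & (fst_node F == u) /\ t = LS I F in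
  let E_v t := exists2 F, F \in Fs & (lst_node F == v) /\ t = ES I F in
  let L_v t := exists2 F, F \in Fs & (fst_node F == v) /\ t = LS I F in
  [/\ (forall t, E_u t -> a t) ->
        forall t, alpha I u <= t <= beta I u -> a t,
      (forall t, L_u t -> b t) ->
        forall t, alpha I u <= t <= beta I u -> b t,
      (forall t, E_v t -> c t) ->
        forall t, alpha I v <= t <= beta I v -> c t &
      (forall t, L_v t -> d t) ->
        forall t, alpha I v <= t <= beta I v -> d t].
Proof.
rewrite /=.
have h2 : 1 <= 2 - p by lra.
have h1 : 1 <= 1 + p by rewrite lerDl.
split=> H t _.
- have K := (@typeA R _ Fs x (fun F => lst_node F == u) (fun F => fst_node F == v) (ES I) (LS I) (dmin I u v) (2 - p) x_ge0 (le_trans out_v h2)).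
  exact: K H t.
- have K := (@typeB R _ Fs x (fun F => fst_node F == u) (fun F => lst_node F == v) (LS I) (ES I) (dmax I u v) (2 - p) x_ge0 (le_trans in_v h2)).
  exact: K H t.
- have K := (@typeA R _ Fs x (fun F => lst_node F == v) (fun F => fst_node F == u) (ES I) (LS I) (dmin I v u) (1 + p) x_ge0 (le_trans out_u h1)).
  exact: K H t.
- have K := (@typeB R _ Fs x (fun F => fst_node F == v) (fun F => lst_node F == u) (LS I) (ES I) (dmax I v u) (1 + p) x_ge0 (le_trans in_u h1)).
  exact: K H t.
Qed.
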